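(* Let $G=(V,E)$ be a finite graph with nonnegative edge weights $w\in\mathbb{R}^E$, and let $W\in\mathcal S^V$ be the symmetric matrix with $W_{xy}=w_{xy}$ for $\{x,y\}\in E$ and $W_{xy}=M$ for distinct $x,y$ with $\{x,y\}\notin E$, where $M$ is a positive number larger than all edge weights. Then every perfect elimination ordering of the matrix $-W$ is a distance-preserving elimination ordering of $(G,w)$.
   Context: A perfect elimination ordering of a symmetric matrix $A$ indexed by $V$ is a linear order $\pi$ of $V$ with $A_{yz}\ge\min\{A_{xy},A_{xz}\}$ for all $x<_\pi y<_\pi z$; for $A=-W$ this reads $W_{yz}\le\max\{W_{xy},W_{xz}\}$. $d_{(H,w)}$ denotes the shortest path metric of a weighted graph $(H,w)$. A linear order $v_1,\dots,v_n$ of $V$ is a distance-preserving elimination ordering of $(G,w)$ if for each $i\in[n]$ the induced weighted subgraph $G_i=G[\{v_i,\dots,v_n\}]$ with weights $w$ satisfies: $d_{(G_i,w)}$ coincides with the restriction of $d_{(G,w)}$ to $\{v_i,\dots,v_n\}$. *)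

(* Defs.v *)
From HB Require Import structures.
From mathcomp Require Import all_boot all_order all_algebra.
From mathcomp Require Import all_classical all_reals.
From mathcomp Require Import ereal.
Set Implicit Arguments. Unset Strict Implicit. Unset Printing Implicit Defensive.
Import Order.TTheory GRing.Theory Num.Theory.
Local Open Scope classical_set_scope.
Local Open Scope ring_scope.

Section Defs.
Variables (R : realType) (V : finType).

Definition simple_graph (e : rel V) := symmetric e /\ irreflexive e.

Definition walk_weight (w : V -> V -> R) (x : V) (p : seq V) : R :=
  \sum_(uv <- zip (x :: p) p) w uv.1 uv.2.

Definition walk_in (e : rel V) (S : {set V}) (x y : V) (p : seq V) : Prop :=
  [/\ x \in S, all (fun v => v \in S) p, path e x p & last x p = y].

(* Shortest path metric d_{(G[S],w)}(x,y), valued in \bar R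
   (+oo when no path exists). *)
Definition spdist (e : rel V) (w : V -> V -> R) (S : {set V}) (x y : V)
  : \bar R :=
  ereal_inf [set (walk_weight w x p)%:E | p in [set p | walk_in e S x y p]].

(* A linear order of V, represented by an enumeration s of V. *)
Definition linear_order (s : seq V) := uniq s /\ forall v, v \in s.

Definition ltpi (s : seq V) (x y : V) := (index x s < index y s)%N.

Definition peo (A : V -> V -> R) (s : seq V) :=
  linear_order s /\
  forall x y z, ltpi s x y -> ltpi s y z -> Num.min (A x y) (A x z) <= A y z.

(* The vertex set {v_i, ..., v_n} (0-based index i). *)
Definition suffix_set (s : seq V) (i : nat) : {set V} :=
  [set v | (i <= index v s)%N].

Definition dp_elim_ordering (e : rel V) (w : V -> V -> R) (s : seq V) :=
  linear_order s /\
  forall i, (i < size s)%N ->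
    forall x y, x \in suffix_set s i -> y \in suffix_set s i ->
      spdist e w (suffix_set s i) x y = spdist e w [set: V] x y.

(* The matrix W: w on edges, M on distinct non-adjacent pairs, 0 on the
   diagonal (the diagonal is never used). *)
Definition Wmat (e : rel V) (w : V -> V -> R) (M : R) : V -> V -> R :=
  fun x y => if x == y then 0 else if e x y then w x y else M.

End Defs.

(* Main.v *)
Require Import Defs.
From HB Require Import structures.
From mathcomp Require Import all_boot all_order all_algebra.
From mathcomp Require Import all_classical all_reals.
From mathcomp Require Import ereal.
Import Order.TTheory GRing.Theory Num.Theory.
Local Open Scope ring_scope.

Lemma ww_cons (R : realType) (V : finType) (w : V -> V -> R) x y p :
  walk_weight w x (y :: p) = w x y + walk_weight w y p.
Proof. by rewrite /walk_weight /= big_cons. Qed.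

Lemma ww_cat (R : realType) (V : finType) (w : V -> V -> R) x p1 p2 :
  walk_weight w x (p1 ++ p2) = walk_weight w x p1 + walk_weight w (last x p1) p2.
Proof.
elim: p1 x => [|y p1 IH] x /=.
  by rewrite /walk_weight /= big_nil add0r.
by rewrite !ww_cons IH addrA.
Qed.

Lemma exists_min (V : eqType) (f : V -> nat) (x : V) (l : seq V) :
  exists2 v, v \in x :: l & all (fun u => (f v <= f u)%N) (x :: l).
Proof.
elim: l x => [|y l IH] x.
  by exists x; rewrite ?inE ?eqxx //= leqnn.
have [v vin /allP vall] := IH y.
case: (leqP (f x) (f v)) => h.
  exists x; first by rewrite inE eqxx.
  apply/allP => u; rewrite inE => /orP[/eqP->//|uin].
  exact: leq_trans h (vall u uin).
exists v; first by rewrite inE vin orbT.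
apply/allP => u; rewrite inE => /orP[/eqP->|uin]; first exact: ltnW.
exact: vall.
Qed.

Section Core.
End Core.

Lemma key (R : realType) (V : finType) (e : rel V)
  (w : V -> V -> R) (M : R) :
  simple_graph e ->
  (forall x y, e x y -> w x y = w y x) ->
  (forall x y, e x y -> 0 <= w x y) ->
  (forall x y, e x y -> w x y < M) ->
  forall s : seq V,
    peo (fun x y => - Wmat e w M x y) s ->
  forall i n (p : seq V) x, (size p <= n)%N -> path e x p ->
    x \in suffix_set s i -> last x p \in suffix_set s i ->
    exists q, walk_in e (suffix_set s i) x (last x p) q /\
      walk_weight w x q <= walk_weight w x p.
Proof.
move=> [esym eirr] wsym wpos wM s [[us alls] hpeo] i.
have idx_inj : forall u v : V, index u s = index v s -> u = v.
  by move=> u v h; apply: (index_inj u) => //; apply: alls.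
elim=> [|n IH] p x.
  rewrite leqn0 => /nilP -> _ xS _; exists [::]; split => //.
move=> sp pp xS lS.
have [v vin /allP vmin] := @exists_min _ (fun u => index u s) x p.
case: (leqP i (index v s)) => hv.
  exists p; split => //; rewrite /walk_in; split => //.
  apply/allP => u uin; rewrite inE; apply: leq_trans hv _.
  by apply: vmin; rewrite inE uin orbT.
have vx : v != x.
  by apply/eqP => vx; move: xS; rewrite inE -vx => h; have := leq_ltn_trans h hv; rewrite ltnn.
have vp : v \in p by move: vin; rewrite inE (negbTE vx).
case/splitPr: vp sp pp lS vmin => p1 p2.
case: p2 => [|u' p3].
  by move=> _ _; rewrite last_cat /= inE => h; have := leq_ltn_trans h hv; rewrite ltnn.
rewrite size_cat /= cat_path last_cat /= => sp /andP[pp1 /and3P[euv evu' pp3]] lS vmin.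
set u := last x p1 in euv pp1.
have ltvu : forall z, z \in x :: (p1 ++ [:: v, u' & p3]) -> z != v ->
    (index v s < index z s)%N.
  move=> z zin zv; rewrite ltn_neqAle vmin // andbT.
  by apply: contra zv => /eqP h; apply/eqP/idx_inj.
have uin : u \in x :: (p1 ++ [:: v, u' & p3]).
  rewrite /u; case: (lastP p1) => [|p1' y]; first by rewrite inE eqxx.
  by rewrite last_rcons inE mem_cat mem_rcons inE eqxx /= orbT.
have u'in : u' \in x :: (p1 ++ [:: v, u' & p3]).
  by rewrite inE mem_cat !inE eqxx !orbT.
have uv : u != v by apply: contraTneq euv => ->; rewrite eirr.
have u'v : u' != v by apply: contraTneq evu' => ->; rewrite eirr.
have hvu := ltvu u uin uv.
have hvu' := ltvu u' u'in u'v.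
have Hw : walk_weight w x (p1 ++ [:: v, u' & p3]) =
   walk_weight w x p1 + (w u v + w v u') + walk_weight w u' p3.
  by rewrite ww_cat !ww_cons -/u !addrA.
case: (eqVneq u u') => [uu'|uu'].
  have s1 : (size (p1 ++ p3) <= n)%N.
    by rewrite size_cat; move: sp; rewrite addnS ltnS; apply: leq_trans; rewrite leq_add2l leqnSn.
  have s2 : path e x (p1 ++ p3) by rewrite cat_path pp1 -/u uu'.
  have s3 : last x (p1 ++ p3) \in suffix_set s i by rewrite last_cat -/u uu'.
  have [q [qw qle]] := IH (p1 ++ p3) x s1 s2 xS s3.
  exists q; split; first by move: qw; rewrite last_cat -/u uu'.
  apply: (le_trans qle); rewrite Hw ww_cat -/u uu' lerD2r lerDl.
  by rewrite addr_ge0 // wpos // -uu'.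
have Wle : Wmat e w M u u' <= Num.max (w u v) (w v u').
  have hW : forall a b, e v a -> e v b -> (index v s < index a s)%N ->
      (index a s < index b s)%N -> Wmat e w M a b <= Num.max (w v a) (w v b).
    move=> a b eva evb h1 h2.
    have := hpeo v a b h1 h2; rewrite ge_min !lerN2 /Wmat.
    have -> : (v == a) = false by apply/eqP => va; move: h1; rewrite va ltnn.
    have -> : (v == b) = false by apply/eqP => vb; move: h1; rewrite vb ltnNge ltnW // h2.
    rewrite eva evb le_max => /orP[->|->] //; by rewrite orbT.
  have evu : e v u by rewrite esym.
  case: (ltngtP (index u s) (index u' s)) => h.
  - by rewrite wsym //; apply: hW.
  - have := hW u' u evu' evu hvu' h.
    rewrite /Wmat [u' == u]eq_sym [e u' u]esym maxC (wsym u v euv).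
    case: (u == u') => //; case E: (e u u') => //.
    by rewrite (wsym u u' E).
  - by move/idx_inj: h => h; rewrite h eqxx in uu'.
have euu' : e u u'.
  apply: contraTT Wle => neu; rewrite /Wmat (negbTE uu') (negbTE neu) -ltNge.
  by rewrite gt_max !wM // esym.
have wle : w u u' <= w u v + w v u'.
  move: Wle; rewrite /Wmat (negbTE uu') euu' => /le_trans; apply.
  rewrite ge_max wsym // lerDl lerDr !wpos //=.
  by rewrite esym.
have s1 : (size (p1 ++ u' :: p3) <= n)%N.
  by rewrite size_cat /=; move: sp; rewrite addnS ltnS.
have s2 : path e x (p1 ++ u' :: p3) by rewrite cat_path pp1 /= -/u euu' pp3.
have s3 : last x (p1 ++ u' :: p3) \in suffix_set s i by rewrite last_cat.
have [q [qw qle]] := IH (p1 ++ u' :: p3) x s1 s2 xS s3.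
exists q; split; first by move: qw; rewrite last_cat.
apply: (le_trans qle); rewrite Hw ww_cat ww_cons -/u addrA lerD2r lerD2l wsym //.
by rewrite -wsym.
Qed.

Theorem proposition1 (R : realType) (V : finType) (e : rel V)
  (w : V -> V -> R) (M : R) :
  simple_graph e ->
  (forall x y, e x y -> w x y = w y x) ->
  (forall x y, e x y -> 0 <= w x y) ->
  0 < M ->
  (forall x y, e x y -> w x y < M) ->
  forall s : seq V,
    peo (fun x y => - Wmat e w M x y) s -> dp_elim_ordering e w s.
Proof.
move=> hg wsym wpos M0 wM s hpeo.
split; first by case: hpeo.
move=> i _ x y xS yS.
apply/eqP; rewrite eq_le; apply/andP; split.
  apply: le_ereal_inf_tmp => z [p [_ _ pp lp] <-].
  have [q [qw qle]] := @key R V e w M hg wsym wpos wM s hpeo i (size p) p x (leqnn (size p)) pp xS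
    (eq_ind_r (fun t => t \in suffix_set s i) yS lp).
  apply: (@le_trans _ _ (walk_weight w x q)%:E); last by rewrite lee_fin.
  apply: ereal_inf_lbound.
  by exists q => //; rewrite -lp.
apply: le_ereal_inf => z [p [xS' _ pp lp] <-].
exists p => //; split => //.
by apply/allP => v _; rewrite inE.
Qed.
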